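(* Let $q\ge 2$ be even and let $C\subseteq B_q^4$ be a code with $\rho(C)>2$ (i.e. $C$ is capable of correcting single deletions). Then $|C|\le \dfrac{q^2(q+2)}{4}$.
   Context: $B_q=\{0,1,\dots,q-1\}$, $B_q^n$ is the set of words of length $n$ over $B_q$. The deletion–insertion distance $\rho(x,y)$ is the minimum number of deletions and insertions of letters needed to transform $x$ into $y$; for a code $C$ with $|C|\ge2$, $\rho(C)$ is the minimum of $\rho(x,y)$ over distinct $x,y\in C$. For a word $x$, $\lfloor x\rfloor_1$ is the set of words obtained from $x$ by deleting one letter. A code $C\subseteq B_q^n$ is capable of correcting single deletions if the sets $\lfloor x\rfloor_1$ ($x\in C$) are pairwise disjoint; this is equivalent to $\rho(C)>2$. *)

(* Defs.v *)
From mathcomp Require Import all_boot.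
Set Implicit Arguments. Unset Strict Implicit. Unset Printing Implicit Defensive.

(* Words over B_q = {0,...,q-1} are sequences over 'I_q; B_q^n is n.-tuple 'I_q. *)

Definition del_at (T : Type) (i : nat) (x : seq T) : seq T :=
  take i x ++ drop i.+1 x.

Definition in_del1 (T : eqType) (x y : seq T) : bool :=
  has (fun i => del_at i x == y) (iota 0 (size x)).

(* C corrects single deletions: the sets floor(x)_1 (x in C) are pairwise
   disjoint (equivalently rho(C) > 2). *)
Definition corrects_single_deletion (q n : nat) (C : {set n.-tuple 'I_q}) : Prop :=
  forall x y : n.-tuple 'I_q, x \in C -> y \in C -> x != y ->
    forall z : seq 'I_q, ~~ (in_del1 (tval x) z && in_del1 (tval y) z).

(* Main.v *)
From Stdlib Require Import Lia.
From mathcomp Require Import all_boot.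
Set Implicit Arguments. Unset Strict Implicit. Unset Printing Implicit Defensive.

Definition dels (T : Type) (x0 x1 x2 x3 : T) : seq (T * T * T) :=
  [:: (x1, x2, x3); (x0, x2, x3); (x0, x1, x3); (x0, x1, x2)].
Definition W (T : eqType) (z : T * T * T) : nat :=
  1 + (z.1.1 == z.1.2) + (z.1.2 == z.2) + ((z.1.1 == z.1.2) && (z.1.2 == z.2)).
Definition isA (T : eqType) (z : T * T * T) : bool := (z.1.1 == z.2) && (z.1.1 != z.1.2).
Definition abca4 (T : eqType) (x0 x1 x2 x3 : T) : bool :=
  [&& x0 == x3, x0 != x1, x1 != x2 & x0 != x2].

Ltac step := match goal with
 | H : ?a <> ?b |- context [?a == ?b] => rewrite (introF eqP H)
 | H : ?a <> ?b |- context [?b == ?a] => rewrite (introF eqP (nesym H))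
 | |- context [?a == ?a] => rewrite eqxx
 | |- context [?a == ?b] => case: (a =P b) => [?|?]; [subst|]
 end.
Ltac crush := rewrite /= ?inE ?xpair_eqE /=; repeat (step; rewrite /= ?inE ?xpair_eqE /=).

Lemma cov_ge (T : eqType) (x0 x1 x2 x3 : T) :
  4 + (~~ abca4 x0 x1 x2 x3) * count (@isA T) (undup (dels x0 x1 x2 x3))
  <= sumn (map (@W T) (undup (dels x0 x1 x2 x3))).
Proof. rewrite /abca4 /dels /W /isA. crush; by []. Qed.

Lemma abca_even (T : eqType) (x0 x1 x2 x3 a : T) : abca4 x0 x1 x2 x3 ->
  ~~ odd (count (fun z => isA z && (z.1.1 == a)) (undup (dels x0 x1 x2 x3))).
Proof. rewrite /abca4 /dels /isA. crush; try by []. Qed.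

Require Import Defs.

Definition f3 (T : Type) (z : T * T * T) : seq T := [:: z.1.1; z.1.2; z.2].
Lemma f3_inj (T : Type) : injective (@f3 T).
Proof. by move=> [[a b] c] [[a' b'] c'] [-> -> ->]. Qed.

Definition xi (q : nat) (t : 4.-tuple 'I_q) (i : nat) : 'I_q := tnth t (inord i).
Definition dx (q : nat) (t : 4.-tuple 'I_q) := dels (xi t 0) (xi t 1) (xi t 2) (xi t 3).
Definition abc (q : nat) (t : 4.-tuple 'I_q) := abca4 (xi t 0) (xi t 1) (xi t 2) (xi t 3).

Lemma dx_in (q : nat) (t : 4.-tuple 'I_q) z :
  in_del1 (tval t) (f3 z) = (z \in dx t).
Proof.
rewrite /in_del1 -[RHS](mem_map (@f3_inj _)) -has_pred1 has_map.
case: t => [[|x0 [|x1 [|x2 [|x3 [|? ?]]]]] //= Hs].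
by rewrite /dx /xi !(tnth_nth x0) /= !inordK.
Qed.

Lemma sum_seq (T : finType) (F : T -> nat) (s : seq T) :
  sumn (map F (undup s)) = \sum_z (z \in s) * F z.
Proof.
rewrite sumnE big_map big_uniq ?undup_uniq // big_mkcond; apply: eq_bigr => z _.
by rewrite mem_undup; case: (z \in s); rewrite ?mul1n ?mul0n.
Qed.

Lemma sfst (q : nat) (bb : bool) (c : 'I_q) : \sum_a nat_of_bool (bb && (c == a)) = bb.
Proof.
rewrite (bigD1 c) //= eqxx andbT big1 ?addn0 // => a Ha.
by rewrite eq_sym (negbTE Ha) andbF.
Qed.

Lemma sone (q : nat) (c : 'I_q) : \sum_a nat_of_bool (c == a) = 1.
Proof. exact: (sfst true c). Qed.

Lemma sconst (q n : nat) : \sum_(a : 'I_q) n = q * n.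
Proof. by rewrite sum_nat_const card_ord. Qed.

Lemma sum3 (q : nat) (F : 'I_q * 'I_q * 'I_q -> nat) :
  \sum_z F z = \sum_a \sum_b \sum_c F (a, b, c).
Proof.
transitivity (\sum_(p : 'I_q * 'I_q) \sum_c F (p, c)).
  by rewrite pair_bigA; apply: eq_bigr => -[p c].
by symmetry; rewrite pair_bigA; apply: eq_bigr => -[a b].
Qed.

Lemma sumW (q : nat) : \sum_(z : 'I_q * 'I_q * 'I_q) W z = q * (q + 1) ^ 2.
Proof.
rewrite sum3.
transitivity (\sum_(a : 'I_q) \sum_(b : 'I_q) (q + 1 + (q + 1) * (a == b))).
  apply: eq_bigr => a _; apply: eq_bigr => b _.
  rewrite /W /= !big_split /= !sconst sone sfst.
  case: (a == b); rewrite /= ?muln1 ?muln0; apply/eqP; rewrite -?plusE -?multE; apply/eqP; lia.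
transitivity (\sum_(a : 'I_q) (q * (q + 1) + (q + 1))).
  apply: eq_bigr => a _; rewrite big_split /= sconst -big_distrr /= sone muln1 //.
rewrite sconst !expnS expn0 muln1; apply/eqP; rewrite -?plusE -?multE; apply/eqP; lia.
Qed.

Lemma sum_seq_count (T : finType) (P : pred T) (s : seq T) :
  count P (undup s) = \sum_z (z \in s) * P z.
Proof. by rewrite -sum_seq sumn_count. Qed.

Lemma count_split (q : nat) (P : pred ('I_q * 'I_q * 'I_q)) s :
  count P s = \sum_a count (fun z => P z && (z.1.1 == a)) s.
Proof.
elim: s => [|z s IH] /=; first by rewrite big1.
by rewrite big_split /= -IH sfst.
Qed.

Lemma cardA (q : nat) (a : 'I_q) :
  \sum_(z : 'I_q * 'I_q * 'I_q) nat_of_bool (isA z && (z.1.1 == a)) = q.-1.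
Proof.
rewrite sum3.
transitivity (\sum_(a' : 'I_q) \sum_(b : 'I_q) nat_of_bool ((a' != b) && (a == a'))).
  apply: eq_bigr => a' _; apply: eq_bigr => b _.
  rewrite -(sfst ((a' != b) && (a == a')) a'); apply: eq_bigr => c _.
  by rewrite /isA /= [a == a']eq_sym; case: (a' == c); case: (a' == b); case: (a' == a).
rewrite exchange_big /=.
transitivity (\sum_(b : 'I_q) nat_of_bool (b != a)).
  apply: eq_bigr => b _; rewrite -(sfst (b != a) a); apply: eq_bigr => a' _.
  by case: (a =P a') => [->|_]; rewrite ?andbT ?andbF // eq_sym.
rewrite -[q in q.-1](card_ord q) -(cardC1 a) -sum1_card /=.
rewrite [RHS]big_mkcond; apply: eq_bigr => b _; by rewrite !inE; case: (b != a).
Qed.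

Lemma even_sum (I : finType) (P : pred I) (F : I -> nat) :
  (forall i, P i -> ~~ odd (F i)) -> ~~ odd (\sum_(i | P i) F i).
Proof.
move=> H; apply: (big_ind (fun n => ~~ odd n)) => //.
by move=> x y Hx Hy; rewrite oddD (negbTE Hx) (negbTE Hy).
Qed.

Theorem theorem2p1 (q : nat) (C : {set 4.-tuple 'I_q}) :
  2 <= q -> ~~ odd q -> corrects_single_deletion C ->
  4 * #|C| <= q ^ 2 * (q + 2).
Proof.
move=> hq hodd Hc.
have Hdis : forall x y, x \in C -> y \in C -> x != y ->
    forall z, z \in dx x -> (z \in dx y) = false.
  move=> x y Hx Hy Hne z Hzx; apply/negbTE.
  by have := Hc x y Hx Hy Hne (f3 z); rewrite !dx_in Hzx.
pose U z := [exists x in C, z \in dx x].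
have Hcov : forall z, \sum_(x in C) nat_of_bool (z \in dx x) = nat_of_bool (U z).
  move=> z; rewrite /U; case: existsP => [[x0 /andP [Hx0 Hz]]|Hn].
  - rewrite (bigD1 x0) //= Hz big1 // => y /andP [Hy Hne].
    by rewrite (Hdis x0 y) // eq_sym.
  - rewrite big1 // => x Hx; case Hz: (z \in dx x) => //; exfalso; apply: Hn; exists x.
    by rewrite Hx Hz.
pose cA (x : 4.-tuple 'I_q) := count (@isA _) (undup (dx x)).
have Hcovx : forall x, 4 + (~~ abc x) * cA x <= \sum_z (z \in dx x) * W z.
  move=> x; rewrite -sum_seq; exact: cov_ge.
have H1 : 4 * #|C| + \sum_(x in C) (~~ abc x) * cA x <= \sum_z U z * W z.
  rewrite mulnC -sum_nat_const -big_split /=.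
  apply: (@leq_trans (\sum_(x in C) \sum_z (z \in dx x) * W z)); first by apply: leq_sum => x _; exact: Hcovx.
  rewrite exchange_big /=; apply: leq_sum => z _.
  by rewrite -big_distrl /= Hcov.
have H2 : \sum_(z : 'I_q * 'I_q * 'I_q) U z * W z + \sum_(z : 'I_q * 'I_q * 'I_q) nat_of_bool (isA z && ~~ U z) <= \sum_(z : 'I_q * 'I_q * 'I_q) W z.
  rewrite -big_split; apply: leq_sum => z _.
  case: (U z); rewrite /= ?andbF ?andbT ?addn0 ?mul1n ?mul0n ?add0n //.
  by apply: leq_trans (leq_b1 _) _; rewrite /W -!addnA leq_addr.
have H3 : q <= \sum_(z : 'I_q * 'I_q * 'I_q) nat_of_bool (isA z && ~~ U z) + \sum_(x in C) (~~ abc x) * cA x.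
  rewrite -[X in X <= _](muln1 q) -sconst.
  have E1 : \sum_(z : 'I_q * 'I_q * 'I_q) nat_of_bool (isA z && ~~ U z) =
      \sum_(a : 'I_q) \sum_(z : 'I_q * 'I_q * 'I_q) nat_of_bool ((isA z && ~~ U z) && (z.1.1 == a)).
    by rewrite exchange_big; apply: eq_bigr => z _; rewrite sfst.
  have E3 : \sum_(x in C) ~~ abc x * cA x = \sum_(a : 'I_q) \sum_(x in C)
      ~~ abc x * count (fun z => isA z && (z.1.1 == a)) (undup (dx x)).
    by rewrite exchange_big; apply: eq_bigr => x _; rewrite /cA count_split big_distrr.
  rewrite E1 E3 -big_split; apply: leq_sum => a _ /=.
  case: (posnP (\sum_(z : 'I_q * 'I_q * 'I_q) nat_of_bool ((isA z && ~~ U z) && (z.1.1 == a)))) => [H0|Hp];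
    last by apply: leq_trans Hp (leq_addr _ _).
  rewrite H0 add0n.
  have HU : forall z, isA z && (z.1.1 == a) -> U z.
    move=> z /andP [Ha Hb]; case Hn: (U z) => //.
    move/eqP: H0; rewrite sum_nat_eq0 => /forallP /(_ z) /=.
    by rewrite Ha Hb Hn.
  pose c x := count (fun z => isA z && (z.1.1 == a)) (undup (dx x)).
  have Hsum : \sum_(x in C) c x = q.-1.
    rewrite -(cardA a).
    transitivity (\sum_(x in C) \sum_(z : 'I_q * 'I_q * 'I_q) (z \in dx x) * (isA z && (z.1.1 == a))).
      by apply: eq_bigr => x _; exact: sum_seq_count.
    rewrite exchange_big; apply: eq_bigr => z _; rewrite -big_distrl /= Hcov.
    by case Hz: (isA z && (z.1.1 == a)); [rewrite (HU z Hz) | rewrite !muln0].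
  have Hsplit : \sum_(x in C) c x = \sum_(x in C) abc x * c x + \sum_(x in C) ~~ abc x * c x.
    rewrite -big_split; apply: eq_bigr => x _ /=; by case: (abc x); rewrite /= ?mul1n ?mul0n ?addn0.
  have Hev : ~~ odd (\sum_(x in C) abc x * c x).
    apply: even_sum => x _; case Hx: (abc x); last by rewrite mul0n.
    by rewrite mul1n; apply: abca_even; exact: Hx.
  have Hodd : odd q.-1 by rewrite -subn1 oddB ?(ltnW hq) // (negbTE hodd).
  move: Hodd; rewrite -Hsum Hsplit oddD (negbTE Hev) /=.
  exact: odd_gt0.
move: H1 H2 H3; rewrite sumW.
move: (\sum_(z : 'I_q * 'I_q * 'I_q) U z * W z) => u.
move: (\sum_(z : 'I_q * 'I_q * 'I_q) nat_of_bool (isA z && ~~ U z)) => m.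
move: (\sum_(x in C) ~~ abc x * cA x) => e.
move: (4 * #|C|) => a.
rewrite !expnS expn0 !muln1 => /leP H1 /leP H2 /leP H3; apply/leP.
rewrite -?plusE -?multE in H1 H2 H3 *; nia.
Qed.
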